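(* For every $\varepsilon>0$, the following algorithm is $(\varepsilon,0)$-differentially private. Given a graph $G=([n],E)$: set $d=10000/\varepsilon^2$; for each $v\in[n]$ let $\hat d(v)=d(v)+\mathrm{Lap}(3/\varepsilon)$ (independent noise) and let $\mathcal C=\{v:\hat d(v)>d\}$; let $G_1=(\mathcal C,E_1)$ with $E_1=\{\{u,v\}\in E: u,v\in\mathcal C\}$; sample a cut $S_1^A\in\{\pm1\}^{\mathcal C}$ of $G_1$ with $\Pr[S_1^A=\hat S]\propto\exp(\varepsilon\,\mathrm{val}_{G_1}(\hat S)/6)$; let $S_1^B$ be a uniformly random assignment in $\{\pm1\}^{[n]\setminus\mathcal C}$ and $S_1$ the concatenation of $S_1^A$ and $S_1^B$; let $S_2$ be the output of the algorithm $\mathcal A_{\varepsilon/3}$ on $G$; output $S_1$ with probability $1/2$ and $S_2$ with probability $1/2$. Here $\mathcal A_{\varepsilon'}$ is: set $\varepsilon_0=\varepsilon'/2$, choose independent uniform $c_1(v),c_2(v)\in\{\pm1\}$ for all $v$, let $\ell(v)=|\{u:\{u,v\}\in E,c_1(u)=c_1(v)\}|$, sample independent $\zeta_v\sim\mathrm{DLap}(1/\varepsilon_0)$, set $c(v)=c_1(v)$ if $\ell(v)-\lceil\frac{d(v)-1}2\rceil+\zeta_v\le0$ and $c(v)=c_2(v)$ otherwise, and output $c$ (equivalently $\{v:c(v)=+1\}$).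
   Context: $G$ is a simple undirected graph; $d(v)$ is its degree. A cut is an assignment in $\{\pm1\}^V$ (equivalently a vertex subset), and $\mathrm{val}_H(\hat S)$ is the number of edges of $H$ whose endpoints receive different values. $\mathrm{Lap}(b)$ has density $\frac1{2b}e^{-|x|/b}$; $\mathrm{DLap}(1/\varepsilon_0)$ has mass $\frac{e^{\varepsilon_0}-1}{e^{\varepsilon_0}+1}e^{-\varepsilon_0|x|}$ at $x\in\mathbb Z$. Neighboring graphs on $[n]$ differ by one edge; $(\varepsilon,0)$-DP means $\Pr[\mathcal M(G)\in T]\le e^\varepsilon\Pr[\mathcal M(G')\in T]$ for neighbors and all output sets $T$. *)

(* Defs.v *)
From HB Require Import structures.
From mathcomp Require Import all_boot all_order all_algebra.
From mathcomp Require Import all_classical all_reals all_analysis.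
Set Implicit Arguments. Unset Strict Implicit. Unset Printing Implicit Defensive.
Import Order.TTheory GRing.Theory Num.Theory.
Import numFieldNormedType.Exports.

Local Open Scope ring_scope.

(* A simple undirected graph on vertex set 'I_n is given by its edge set:
   a set of 2-element subsets of 'I_n. *)
Definition graph (n : nat) := {set {set 'I_n}}.

Definition simple_graph n (E : graph n) : Prop :=
  forall e, e \in E -> #|e| = 2%N.

Definition neighboring n (E E' : graph n) : Prop :=
  exists e : {set 'I_n}, #|e| = 2%N /\ (E :\: E') :|: (E' :\: E) = [set e].

Definition deg n (E : graph n) (v : 'I_n) : nat := #|[set e in E | v \in e]|.

(* A cut is an assignment in {+1,-1}^V, encoded as a boolean function
   (true = +1, false = -1). *)
Definition cut n := {ffun 'I_n -> bool}.

Definition cutval n (E : graph n) (s : cut n) : nat :=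
  #|[set e in E | [exists u in e, exists w in e, s u != s w]]|.

Definition induced n (E : graph n) (C : {set 'I_n}) : graph n :=
  [set e in E | e \subset C].

Section Noise.
Variable R : realType.

Definition lap_pdf (b x : R) : R := (2 * b)^-1 * expR (- `|x| / b).

Definition lap_tail (b t : R) : R :=
  (\int[@lebesgue_measure R]_(x in `]t, +oo[%classic) lap_pdf b x)%R.

(* mass of DLap(1/eps0) at x in Z *)
Definition dlap_pmf (eps0 : R) (x : int) : R :=
  (expR eps0 - 1) / (expR eps0 + 1) * expR (- eps0 * `|x%:~R|).

Definition dlap_cdf (eps0 : R) (k : int) : R :=
  fine (\sum_(j <oo) (dlap_pmf eps0 (k - j%:Z))%:E)%E.
End Noise.

(* ---------- The algorithms, as output distributions (pmfs on cuts) ---------- *)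
Section Algorithms.
Variables (R : realType) (n : nat).

(* Algorithm A_{eps'}: Pr[ A_{eps'}(G) outputs c = s ].
   c1, c2 uniform in {+-1}^n (prob 2^-n each), zeta_v independent;
   given c1, c2, vertex v independently takes c1(v) with probability
   Pr[ l(v) - ceil((d(v)-1)/2) + zeta_v <= 0 ] = Pr[zeta_v <= ceil((d(v)-1)/2) - l(v)]
   and c2(v) otherwise. *)
Definition ell (E : graph n) (c1 : cut n) (v : 'I_n) : nat :=
  #|[set u | ([set u; v] \in E) && (c1 u == c1 v)]|.

Definition keep_prob (eps' : R) (E : graph n) (c1 : cut n) (v : 'I_n) : R :=
  dlap_cdf (eps' / 2)
    (Num.ceil (((deg E v)%:R - 1) / 2 : R) - (ell E c1 v)%:Z).

Definition algA_pmf (eps' : R) (E : graph n) (s : cut n) : R :=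
  \sum_(c1 : cut n) \sum_(c2 : cut n)
    ((2 ^+ n)^-1 * (2 ^+ n)^-1 *
     \prod_(v : 'I_n)
       (keep_prob eps' E c1 v * (c1 v == s v)%:R
        + (1 - keep_prob eps' E c1 v) * (c2 v == s v)%:R)).

Definition thr (eps : R) : R := 10000 / eps ^+ 2.

(* Pr[ d(v) + Lap(3/eps) > d ] *)
Definition in_prob (eps : R) (E : graph n) (v : 'I_n) : R :=
  lap_tail (3 / eps) (thr eps - (deg E v)%:R).

(* Pr[ calC = C ] (independent noise per vertex) *)
Definition setC_prob (eps : R) (E : graph n) (C : {set 'I_n}) : R :=
  \prod_(v : 'I_n) (if v \in C then in_prob eps E v else 1 - in_prob eps E v).

Definition em_weight (eps : R) (E : graph n) (C : {set 'I_n}) (s : cut n) : R :=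
  expR (eps * (cutval (induced E C) s)%:R / 6).

(* Assignments in {+-1}^C are encoded as cuts that are -1 (false) outside C. *)
Definition em_norm (eps : R) (E : graph n) (C : {set 'I_n}) : R :=
  \sum_(t : cut n | [forall v, (v \notin C) ==> ~~ t v]) em_weight eps E C t.

(* Pr[ S_1 = s | calC = C ]: exponential mechanism on C, uniform outside C *)
Definition S1_cond_pmf (eps : R) (E : graph n) (C : {set 'I_n}) (s : cut n) : R :=
  em_weight eps E C s / em_norm eps E C * (2 ^+ #|~: C|)^-1.

Definition alg_pmf (eps : R) (E : graph n) (s : cut n) : R :=
  2^-1 * (\sum_(C : {set 'I_n}) setC_prob eps E C * S1_cond_pmf eps E C s)
  + 2^-1 * algA_pmf (eps / 3) E s.

Definition alg_prob (eps : R) (E : graph n) (T : {set cut n}) : R :=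
  \sum_(s in T) alg_pmf eps E s.

Definition edge_DP (eps : R) (M : graph n -> {set cut n} -> R) : Prop :=
  forall E E' : graph n, simple_graph E -> simple_graph E' -> neighboring E E' ->
  forall T : {set cut n}, M E T <= expR eps * M E' T.
End Algorithms.

(* Main.v *)
Require Import Defs.
From HB Require Import structures.
From mathcomp Require Import all_boot all_order all_algebra.
From mathcomp Require Import all_classical all_reals all_analysis.
Import Order.TTheory GRing.Theory Num.Theory.
Local Open Scope ring_scope.

From mathcomp Require Import measurable_realfun.
From mathcomp Require Import ring lra zify.
Import numFieldNormedType.Exports.
Local Open Scope classical_set_scope.

Section L.
Variable R : realType.
Notation mu := (@lebesgue_measure R).

Lemma is_derive_expRM (c x : R) :
  is_derive x 1 (fun y => expR (c * y)) (expR (c * x) * c).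
Proof.
have h : is_derive x 1 (fun y : R => c * y) c.
  have := @is_deriveZ R R^o R^o id c x 1 1 (is_derive_id _ _).
  by rewrite /GRing.scale /= mulr1.
exact: (@is_derive1_comp R expR (fun y => c * y) x (expR (c * x)) c).
Qed.

Lemma continuous_expRM (c : R) : continuous (fun y : R => expR (c * y)).
Proof.
move=> x; apply: differentiable_continuous; apply/derivable1_diffP.
by have [] := is_derive_expRM c x.
Qed.

Lemma continuous_lap_pdf (b : R) : continuous (lap_pdf b).
Proof.
move=> x; rewrite /lap_pdf.
apply: (@continuousM _ R^o (fun=> (2 * b)^-1) (fun x => expR (- `|x| / b))).
  exact: cst_continuous.
apply: (@continuous_comp _ _ _ (fun x : R => - `|x| / b) expR); last exact: continuous_expR.
apply: (@continuousM _ R^o (fun x : R => - `|x|) (fun=> b^-1)); last exact: cst_continuous.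
apply: (@continuousN _ R^o _ (fun x : R => `|x|) x).
exact: norm_continuous.
Qed.

Lemma measurable_lap_pdf (b : R) (D : set R) : measurable D ->
  measurable_fun D (EFin \o lap_pdf b).
Proof.
move=> mD.
apply/measurable_EFinP; apply: measurable_funTS.
exact: continuous_measurable_fun (continuous_lap_pdf b).
Qed.

Lemma lap_pdf_ge0 (b x : R) : 0 < b -> 0 <= lap_pdf b x.
Proof. by move=> b0; rewrite /lap_pdf mulr_ge0 ?expR_ge0 // invr_ge0 mulr_ge0 // ltW. Qed.

Lemma lap_int_ge0 (b t : R) : 0 < b -> 0 <= t ->
  (\int[mu]_(x in `]t, +oo[) (lap_pdf b x)%:E = (2^-1 * expR (- b^-1 * t))%:E)%E.
Proof.
move=> b0 t0.
rewrite integral_itv_obnd_cbnd; last exact: measurable_lap_pdf.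
rewrite (@ge0_continuous_FTC2y R (lap_pdf b) (fun x => - (2^-1 * expR (- b^-1 * x))) t 0).
- rewrite -EFinB sub0r opprK; done.
- by move=> x _; exact: lap_pdf_ge0.
- exact: continuous_subspaceT (continuous_lap_pdf b).
- rewrite -oppr0; apply: cvgN; rewrite -(mulr0 (2^-1 : R)); apply: cvgMl_tmp.
  rewrite (_ : (fun x => expR (- b^-1 * x)) =
               (fun z => expR (- z)) \o (fun z => b^-1 * z)); last first.
    by apply: funext => x; rewrite /= mulNr.
  apply: (@cvg_comp _ _ _ _ _ _ (pinfty_nbhs R)); last exact: cvgr_expR.
  by apply: gt0_cvgMry; rewrite ?invr_gt0 //; exact: cvg_id.
- move=> x _; apply: diff_derivable; apply: differentiableN.
  apply: differentiableM => //.
  by apply/derivable1_diffP; have [] := is_derive_expRM (- b^-1) x.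
- apply: cvg_at_right_filter; apply: cvgN; apply: cvgMl_tmp.
  exact: continuous_expRM.
- move=> x; rewrite in_itv /= andbT => tx.
  have hd : is_derive x 1 (fun x => - (2^-1 * expR (- b^-1 * x)))
     (- (2^-1 * (expR (- b^-1 * x) * (- b^-1)))).
    apply: is_deriveN.
    have := @is_deriveZ R R^o R^o (fun x => expR (- b^-1 * x)) (2^-1) x 1 _ (is_derive_expRM _ _).
    by rewrite /GRing.scale /=.
  rewrite derive1E derive_val /lap_pdf ger0_norm; last by rewrite (le_trans t0) ?ltW.
  rewrite !mulrN opprK.
  have -> : - x / b = - b^-1 * x by ring.
  by field; rewrite gt_eqF.
Qed.


Lemma lap_int_lt0 (b t : R) : 0 < b -> t < 0 ->
  (\int[mu]_(x in `]t, +oo[) (lap_pdf b x)%:E = (1 - 2^-1 * expR (b^-1 * t))%:E)%E.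
Proof.
move=> b0 t0.
rewrite (@itv_bndbnd_setU _ _ _ (BRight 0)); last 2 first.
  by rewrite bnd_simp ltW.
  by rewrite bnd_simp.
rewrite ge0_integral_setU //=; last 3 first.
- apply: (measurable_lap_pdf b); exact: measurableU.
- by move=> x _; rewrite lee_fin lap_pdf_ge0.
- apply/disj_set2P; apply/seteqP; split => x //=.
  by rewrite !in_itv /= andbT => -[/andP[_ h1] h2]; move: (le_lt_trans h1 h2); rewrite ltxx.
rewrite lap_int_ge0 // mulr0 expR0 mulr1.
rewrite integral_itv_obnd_cbnd; last exact: measurable_lap_pdf.
rewrite (@continuous_FTC2 R (lap_pdf b) (fun x => 2^-1 * expR (b^-1 * x)) t 0) //.
- by rewrite mulr0 expR0 mulr1 -!EFinD; congr (_%:E); lra.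
- exact: continuous_subspaceT (continuous_lap_pdf b).
- split.
  + move=> x _; apply: diff_derivable.
    apply: differentiableM => //.
    by apply/derivable1_diffP; have [] := is_derive_expRM (b^-1) x.
  + apply: cvg_at_right_filter; apply: cvgMl_tmp.
    exact: continuous_expRM.
  + apply: cvg_at_left_filter; apply: cvgMl_tmp.
    exact: continuous_expRM.
- move=> x; rewrite in_itv /= => /andP[tx x0].
  have hd : is_derive x 1 (fun x => 2^-1 * expR (b^-1 * x))
     (2^-1 * (expR (b^-1 * x) * b^-1)).
    have := @is_deriveZ R R^o R^o (fun x => expR (b^-1 * x)) (2^-1) x 1 _ (is_derive_expRM _ _).
    by rewrite /GRing.scale /=.
  rewrite derive1E derive_val /lap_pdf ltr0_norm // opprK.
  have -> : x / b = b^-1 * x by ring.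
  by field; rewrite gt_eqF.
Qed.

Definition Gl (b t : R) : R :=
  if 0 <= t then 2^-1 * expR (- b^-1 * t) else 1 - 2^-1 * expR (b^-1 * t).

Lemma lap_tailE (b t : R) : 0 < b -> lap_tail b t = Gl b t.
Proof.
move=> b0; rewrite /lap_tail /Gl /Rintegral.
by case: leP => t0; [rewrite lap_int_ge0 | rewrite lap_int_lt0].
Qed.

End L.
Arguments Gl {R}.

Section GlIneq.
Variable R : realType.
Variable b : R.
Hypothesis b0 : 0 < b.

Lemma Gl_ge0 t : 0 <= Gl b t.
Proof.
rewrite /Gl; case: ifP => t0; first by rewrite mulr_ge0 ?expR_ge0.
have : expR (b^-1 * t) < 1.
  by rewrite expR_lt1 pmulr_rlt0 ?invr_gt0 // ltNge t0.
have := expR_ge0 (b^-1 * t); lra.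
Qed.

Lemma Gl_compl t : 1 - Gl b t = Gl b (- t).
Proof.
rewrite /Gl oppr_ge0; case: (ltgtP t 0) => t0.
- by rewrite mulNr mulrN opprK; lra.
- by rewrite mulrN mulNr.
- by rewrite t0 oppr0 !mulr0 expR0; lra.
Qed.

Lemma Gl_anti t t' : t <= t' -> Gl b t' <= Gl b t.
Proof.
have a0 : 0 < b^-1 by rewrite invr_gt0.
move=> tt'; rewrite /Gl; case: (leP 0 t) => t0.
- rewrite (le_trans t0 tt').
  by rewrite ler_pM2l ?invr_gt0 // ler_expR !mulNr lerN2 ler_pM2l.
- case: (leP 0 t') => t'0.
  + have : expR (- b^-1 * t') <= 1 by rewrite expR_le1 mulNr oppr_le0 mulr_ge0 // ltW.
    have : expR (b^-1 * t) < 1 by rewrite expR_lt1 pmulr_rlt0.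
    lra.
  + have : expR (b^-1 * t) <= expR (b^-1 * t') by rewrite ler_expR ler_pM2l.
    lra.
Qed.

Lemma Gl_key t : Gl b t <= expR (b^-1) * Gl b (t + 1).
Proof.
have a0 : 0 < b^-1 by rewrite invr_gt0.
set K := expR (b^-1).
have K1 : 1 <= K by rewrite -expR0 ler_expR ltW.
rewrite /Gl; case: (leP 0 t) => t0.
  rewrite ifT; last by lra.
  rewrite mulrCA /K -expRD ler_pM2l // ler_expR.
  by rewrite mulrDr mulr1; lra.
set x := expR (b^-1 * t).
have x0 : 0 < x by exact: expR_gt0.
have x1 : x * K = expR (b^-1 * (t + 1)) by rewrite -expRD mulrDr mulr1.
have hx : x * K < 1 -> x < 1 by move=> h; nra.
case: (leP 0 (t + 1)) => t1.
  have e1 : expR (- b^-1 * (t + 1)) = (x * K)^-1 by rewrite x1 -expRN mulNr.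
  rewrite e1 invfM.
  have xK0 : 0 < K by exact: expR_gt0.
  have -> : K * (2^-1 * (x^-1 * K^-1)) = 2^-1 * x^-1 by field; rewrite !gt_eqF.
  suff h : 0 <= 2^-1 * x^-1 - (1 - 2^-1 * x) by lra.
  have -> : 2^-1 * x^-1 - (1 - 2^-1 * x) = (x - 1)^+2 / (2 * x).
    by field; rewrite gt_eqF.
  by rewrite divr_ge0 ?sqr_ge0 // mulr_ge0 // ltW.
rewrite -x1.
have xK : x * K < 1 by rewrite x1 expR_lt1 pmulr_rlt0.
nra.
Qed.

Lemma Gl_ratio t t' : `|t - t'| <= 1 -> Gl b t <= expR (b^-1) * Gl b t'.
Proof.
have a0 : 0 < b^-1 by rewrite invr_gt0.
have K1 : 1 <= expR (b^-1) by rewrite -expR0 ler_expR ltW.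
move=> h; case: (leP t' t) => tt'.
  apply: le_trans (Gl_anti _ _ tt') _.
  by rewrite ler_peMl // Gl_ge0.
apply: le_trans (Gl_key t) _; rewrite ler_pM2l ?expR_gt0 //.
apply: Gl_anti; move: h; rewrite ler_norml; lra.
Qed.

Lemma Gl_ratio_compl t t' : `|t - t'| <= 1 ->
  1 - Gl b t <= expR (b^-1) * (1 - Gl b t').
Proof.
move=> h; rewrite !Gl_compl; apply: Gl_ratio.
by rewrite -opprB normrN opprK addrC.
Qed.

End GlIneq.

Section D.
Variable R : realType.
Variable e0 : R.
Hypothesis e0_gt0 : 0 < e0.

Let r := expR (- e0).
Let c := (expR e0 - 1) / (expR e0 + 1).

Lemma cE : c = (1 - r) / (1 + r).
Proof.
rewrite /c /r expRN.
have h1 : expR e0 != 0 by rewrite gt_eqF ?expR_gt0.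
have h2 : expR e0 + 1 != 0 by rewrite gt_eqF // addr_gt0 ?expR_gt0.
have h3 : 1 + (expR e0)^-1 != 0 by rewrite gt_eqF // addr_gt0 ?invr_gt0 ?expR_gt0.
by field; rewrite h1 h2.
Qed.

Lemma r_gt0 : 0 < r. Proof. exact: expR_gt0. Qed.
Lemma r_lt1 : r < 1. Proof. by rewrite /r expR_lt1 oppr_lt0. Qed.

Definition Hk (k : int) : R :=
  if 0 <= k then 1 - expR (- e0 * (k%:~R + 1)) / (1 + r)
  else expR (e0 * k%:~R) / (1 + r).

Lemma pmf_ge0 x : 0 <= dlap_pmf e0 x.
Proof.
rewrite /dlap_pmf mulr_ge0 ?expR_ge0 // divr_ge0 //.
by rewrite subr_ge0 -expR0 ler_expR ltW.
Qed.

Lemma series_base (k : int) : k < 0 ->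
  (\sum_(j <oo) (dlap_pmf e0 (k - j%:Z))%:E)%E = (Hk k)%:E.
Proof.
move=> k0; rewrite /Hk leNgt k0 /=.
have hu : forall j : nat, dlap_pmf e0 (k - j%:Z) = geometric (c * expR (e0 * k%:~R)) r j.
  move=> j; rewrite /dlap_pmf /geometric -[RHS]mulrA; congr (_ * _).
  rewrite ltr0_norm; last first.
    by rewrite ltrz0; lia.
  rewrite /r -expRM_natr -expRD; congr expR.
  rewrite intrB; ring.
rewrite (eq_eseriesr (fun j _ => congr1 EFin (hu j))).
apply/cvg_lim => //.
have -> : (fun n => (\sum_(0 <= i < n) (geometric (c * expR (e0 * k%:~R)) r i)%:E)%E)
   = EFin \o series (geometric (c * expR (e0 * k%:~R)) r).
  by apply: funext => n; rewrite /= /series /= sumEFin.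
apply: cvg_EFin; first exact: nearW.
have -> : expR (e0 * k%:~R) / (1 + r) = c * expR (e0 * k%:~R) * (1 - r)^-1.
  rewrite cE; have := r_lt1; have := r_gt0 => ? ?.
  by field; apply/andP; split; rewrite gt_eqF // ?subr_gt0 // addr_gt0.
apply: cvg_geometric_series.
by rewrite ger0_norm ?r_lt1 // ltW // r_gt0.
Qed.


Lemma series_rec (k : int) :
  (\sum_(j <oo) (dlap_pmf e0 (k - j%:Z))%:E)%E =
  ((dlap_pmf e0 k)%:E + \sum_(j <oo) (dlap_pmf e0 ((k - 1) - j%:Z))%:E)%E.
Proof.
rewrite nneseries_recl //; last by move=> j _; rewrite lee_fin pmf_ge0.
rewrite subr0; congr (_ + _)%E.
rewrite -nneseries_addn; last by move=> j; rewrite lee_fin pmf_ge0.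
apply: eq_eseriesr => j _; congr (_%:E); congr dlap_pmf.
rewrite addn1 -addn1 PoszD; ring.
Qed.

Lemma series_nat (m : nat) :
  (\sum_(j <oo) (dlap_pmf e0 (m%:Z - j%:Z))%:E)%E = (Hk m)%:E.
Proof.
have hr := r_gt0; have hr1 := r_lt1.
elim: m => [|m IH].
  rewrite series_rec series_base // -EFinD /Hk /= /dlap_pmf -/c cE.
  have z0 : (0%Z%:~R : R) = 0 by [].
  have z1 : ((0%Z - 1)%:~R : R) = -1 by [].
  rewrite z0 z1 normr0 mulr0 expR0 mulr1 add0r mulrN1 mulr1 -/r.
  have hr2 : 1 + r != 0 by rewrite gt_eqF //; lra.
  by congr (_%:E); field.
rewrite series_rec (_ : m.+1%:Z - 1 = m%:Z); last by rewrite -addn1 PoszD addrK.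
rewrite IH -EFinD /Hk /= /dlap_pmf -/c cE.
rewrite ger0_norm; last by rewrite ler0z.
have -> : expR (- e0 * (m.+1%:~R + 1)) = expR (- e0 * (m%:~R + 1)) * r.
  by rewrite /r -expRD; congr expR; rewrite -addn1 PoszD intrD; ring.
have -> : expR (- e0 * m.+1%:~R) = expR (- e0 * (m%:~R + 1)).
  by congr expR; rewrite -addn1 PoszD intrD.
congr (_%:E); field; rewrite gt_eqF //; lra.
Qed.

Lemma dlap_cdfE (k : int) : dlap_cdf e0 k = Hk k.
Proof.
rewrite /dlap_cdf; case: (ltP k 0) => k0; first by rewrite series_base.
have [m ->] : exists m : nat, k = m%:Z by exists `|k|%N; rewrite gez0_abs.
by rewrite series_nat.
Qed.


Lemma series_H (k : int) :
  (\sum_(j <oo) (dlap_pmf e0 (k - j%:Z))%:E)%E = (Hk k)%:E.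
Proof.
case: (ltP k 0) => k0; first by rewrite series_base.
have [m ->] : exists m : nat, k = m%:Z by exists `|k|%N; rewrite gez0_abs.
by rewrite series_nat.
Qed.

Lemma Hk_step (k : int) : Hk (k + 1) = dlap_pmf e0 (k + 1) + Hk k.
Proof.
have := series_rec (k + 1); rewrite addrK !series_H -EFinD.
by case.
Qed.

Lemma Hk_ge0 k : 0 <= Hk k.
Proof.
have hr := r_gt0; have hr1 := r_lt1.
rewrite /Hk; case: ifP => k0; last by rewrite divr_ge0 ?expR_ge0 //; lra.
have : expR (- e0 * (k%:~R + 1)) <= 1.
  rewrite expR_le1 mulNr oppr_le0 mulr_ge0 ?(ltW e0_gt0) //.
  by rewrite addr_ge0 // ler0z.
move=> h; rewrite subr_ge0 ler_pdivrMr; last by lra.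
lra.
Qed.

Lemma Hk_compl k : 1 - Hk k = Hk (- k - 1).
Proof.
rewrite /Hk; case: (leP 0 k) => k0.
  rewrite ifF; last by apply/negbTE; rewrite -ltNge; lia.
  rewrite opprB addrC subrK; congr (_ / _); congr expR.
  by rewrite intrB intrN; ring.
rewrite ifT; last by lia.
congr (_ - _ / _); congr expR.
by rewrite intrB intrN; ring.
Qed.

Lemma Hk_key (k : int) : Hk (k + 1) <= expR e0 * Hk k.
Proof.
have hr := r_gt0; have hr1 := r_lt1.
have Kr : expR e0 * r = 1 by rewrite /r expRN mulfV // gt_eqF ?expR_gt0.
have K1 : 1 <= expR e0 by rewrite -expR0 ler_expR ltW.
rewrite /Hk; case: (leP 0 k) => k0.
  rewrite ifT; last by lia.
  set y := expR (- e0 * (k%:~R + 1)).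
  have -> : expR (- e0 * ((k + 1)%:~R + 1)) = y * r.
    by rewrite /y /r -expRD intrD; congr expR; ring.
  have y1 : y <= 1.
    rewrite expR_le1 mulNr oppr_le0 mulr_ge0 ?(ltW e0_gt0) //.
    by rewrite addr_ge0 // ler0z.
  have y0 : 0 < y by exact: expR_gt0.
  have hr2 : 1 + r != 0 by rewrite gt_eqF //; lra.
  have hr0 : r != 0 by rewrite gt_eqF.
  rewrite -subr_ge0.
  have -> : expR e0 * (1 - y / (1 + r)) - (1 - y * r / (1 + r)) =
     ((expR e0 - 1) * (1 + r) - y * (expR e0 - r)) / (1 + r).
    by field; rewrite hr2.
  rewrite divr_ge0 //; last by lra.
  have : r <= expR e0 by lra.
  nra.
case: (leP 0 (k + 1)) => k1.
  have -> : k = -1 by lia.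
  have -> : ((-1 + 1)%:~R : R) = 0 by [].
  have -> : ((-1)%:~R : R) = -1 by [].
  have -> : expR (- e0 * (0 + 1)) = r by rewrite add0r mulr1.
  have -> : expR (e0 * -1) = r by rewrite mulrN1.
  have hr2 : 1 + r != 0 by rewrite gt_eqF //; lra.
  have -> : 1 - r / (1 + r) = 1 / (1 + r) by field.
  by rewrite mulrA Kr.
have -> : expR (e0 * (k + 1)%:~R) = expR e0 * expR (e0 * k%:~R).
  by rewrite -expRD intrD; congr expR; ring.
by rewrite mulrA.
Qed.

Lemma Hk_ratio k k' : `|k - k'| <= 1 -> Hk k <= expR e0 * Hk k'.
Proof.
have K1 : 1 <= expR e0 by rewrite -expR0 ler_expR ltW.
move=> h.
have : k = k' \/ k = k' + 1 \/ k' = k + 1 by move: h; rewrite ler_norml; lia.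
case=> [->|[->|->]].
- by rewrite ler_peMl // Hk_ge0.
- exact: Hk_key.
- rewrite Hk_step; have h0 := pmf_ge0 (k + 1); have h1 := Hk_ge0 k.
  nra.
Qed.

Lemma Hk_ratio_compl k k' : `|k - k'| <= 1 -> 1 - Hk k <= expR e0 * (1 - Hk k').
Proof.
move=> h; rewrite !Hk_compl; apply: Hk_ratio.
by rewrite (_ : - k - 1 - (- k' - 1) = - (k - k')) ?normrN //; ring.
Qed.

End D.
Arguments Hk {R}.

Local Close Scope classical_set_scope.
Set Implicit Arguments. Unset Strict Implicit.

Lemma card_near (T : finType) (X Y : {set T}) x :
  (forall y, y != x -> (y \in X) = (y \in Y)) -> x \notin X ->
  X \subset Y /\ (#|Y| <= #|X| + 1)%N.
Proof.
move=> h xX; split.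
  apply/fintype.subsetP => y yX; have yx : y != x by apply: contraNneq xX => <-.
  by rewrite -h.
have : Y \subset x |: X.
  apply/fintype.subsetP => y yY; rewrite in_setU1; case: eqP => //= /eqP yx.
  by rewrite h.
move/subset_leq_card; rewrite cardsU1 xX addnC.
done.
Qed.

Lemma card_near_eq (T : finType) (X Y : {set T}) x :
  (forall y, y != x -> (y \in X) = (y \in Y)) -> x \notin X -> x \in Y ->
  #|Y| = (#|X| + 1)%N.
Proof.
move=> h xX xY.
have -> : Y = x |: X.
  apply/finset.setP => y; rewrite in_setU1; case: (eqVneq y x) => [->|yx] //=.
  by rewrite h.
by rewrite cardsU1 xX addnC.
Qed.

Lemma card_near_same (T : finType) (X Y : {set T}) x :
  (forall y, y != x -> (y \in X) = (y \in Y)) -> x \notin X -> x \notin Y ->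
  #|Y| = #|X|.
Proof.
move=> h xX xY; apply: eq_card => y.
case: (eqVneq y x) => [->|yx]; first by rewrite (negbTE xX) (negbTE xY).
by rewrite h.
Qed.

Arguments card_near {T X Y x}.
Arguments card_near_eq {T X Y x}.
Arguments card_near_same {T X Y x}.

Section Graph.
Variable n : nat.
Implicit Types (A B : graph n) (e : {set 'I_n}).

Definition addE A B e :=
  e \notin A /\ e \in B /\ (forall f, f != e -> (f \in A) = (f \in B)).

Lemma neighboring_split A B : neighboring A B ->
  exists e, #|e| = 2%N /\ (addE A B e \/ addE B A e).
Proof.
case=> e [e2 he]; exists e; split => //.
have hf : forall f, (f \in (A :\: B) :|: (B :\: A)) = (f == e).
  by move=> f; rewrite he inE.
have hoff : forall f, f != e -> (f \in A) = (f \in B).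
  move=> f fe; have := hf f; rewrite (negbTE fe) !inE.
  by case: (f \in A); case: (f \in B).
have := hf e; rewrite eqxx !inE.
case eA: (e \in A); case eB: (e \in B) => //= _.
  by right; split; [rewrite eB | split => // f fe; rewrite hoff].
by left; split; [rewrite eA | split => // f fe; rewrite hoff].
Qed.

Lemma deg_off A B e v : addE A B e -> v \notin e -> deg B v = deg A v.
Proof.
move=> [eA [eB h]] ve; rewrite /deg; apply: (@card_near_same _ _ _ e).
- by move=> f fe; rewrite !inE h.
- by rewrite inE (negbTE eA).
- by rewrite inE (negbTE ve) andbF.
Qed.

Lemma deg_on A B e v : addE A B e -> v \in e -> deg B v = (deg A v + 1)%N.
Proof.
move=> [eA [eB h]] ve; rewrite /deg; apply: (@card_near_eq _ _ _ e).
- by move=> f fe; rewrite !inE h.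
- by rewrite inE (negbTE eA).
- by rewrite inE eB ve.
Qed.

Lemma pair_neq e v u w : #|e| = 2%N -> e = [set v; w] -> u != w -> [set u; v] != e.
Proof.
move=> e2 he uw; subst e; apply/negP => /eqP heq.
have : u \in [set v; w] by rewrite -heq !inE eqxx.
rewrite !inE (negbTE uw) orbF => /eqP uv; subst u.
move: e2; rewrite -heq finset.setUid cards1.
done.
Qed.

Lemma ell_near A B e (c : {ffun 'I_n -> bool}) v : addE A B e -> #|e| = 2%N ->
  (ell A c v <= ell B c v <= ell A c v + 1)%N.
Proof.
move=> [eA [eB h]] e2; rewrite /ell.
case ve: (v \in e).
  have [x [y [xy exy]]] : exists x y, x != y /\ e = [set x; y].
    by apply/cards2P; rewrite e2.
  have [w hw] : exists w, e = [set v; w].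
    move: ve; rewrite exy !inE => /orP[] /eqP ->.
      by exists y.
    by exists x; rewrite finset.setUC.
  have h1 : forall u, u != w -> (u \in [set u | ([set u; v] \in A) && (c u == c v)])
       = (u \in [set u | ([set u; v] \in B) && (c u == c v)]).
    move=> u uw; rewrite !inE h //; exact: pair_neq e2 hw uw.
  have h2 : w \notin [set u | ([set u; v] \in A) && (c u == c v)].
    by rewrite inE -(finset.setUC [set v]) -hw (negbTE eA).
  have [sub le] := card_near h1 h2.
  by rewrite (subset_leq_card sub) le.
have -> : [set u | ([set u; v] \in B) && (c u == c v)] =
          [set u | ([set u; v] \in A) && (c u == c v)].
  apply/finset.setP => u; rewrite !inE h //; apply/negP => /eqP he.
  by move: ve; rewrite -he !inE eqxx orbT.
by rewrite leqnn leq_addr.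
Qed.

Lemma cutval_near A B e (C : {set 'I_n}) (s : {ffun 'I_n -> bool}) : addE A B e ->
  (cutval (Defs.induced A C) s <= cutval (Defs.induced B C) s <= cutval (Defs.induced A C) s + 1)%N.
Proof.
move=> [eA [eB h]]; rewrite /cutval /Defs.induced.
have h1 : forall f, f != e ->
  (f \in [set f in [set f in A | f \subset C] | [exists u in f, exists w in f, s u != s w]]) =
  (f \in [set f in [set f in B | f \subset C] | [exists u in f, exists w in f, s u != s w]]).
  by move=> f fe; rewrite !inE h.
have h2 : e \notin [set f in [set f in A | f \subset C] | [exists u in f, exists w in f, s u != s w]].
  by rewrite !inE (negbTE eA).
have [sub le] := card_near h1 h2.
by rewrite (subset_leq_card sub) le.
Qed.

End Graph.

Section Graph2.
Variable n : nat.
Implicit Types (A B : graph n) (e : {set 'I_n}).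

Lemma ell_off A B e (c : {ffun 'I_n -> bool}) v : addE A B e -> v \notin e ->
  ell B c v = ell A c v.
Proof.
move=> [eA [eB h]] ve; rewrite /ell; apply: eq_card => u; rewrite !inE h //.
apply/negP => /eqP he; move: ve; rewrite -he !inE eqxx orbT.
done.
Qed.

Definition symE A B e := addE A B e \/ addE B A e.

Lemma symE_sym A B e : symE A B e -> symE B A e.
Proof. by case=> h; [right|left]. Qed.

Lemma deg_same A B e v : symE A B e -> v \notin e -> deg A v = deg B v.
Proof. by case=> h ve; rewrite (deg_off h ve). Qed.

Lemma ell_same A B e c v : symE A B e -> v \notin e -> ell A c v = ell B c v.
Proof. by case=> h ve; rewrite (ell_off c h ve). Qed.

Lemma cutval_diff A B e C s : symE A B e ->
  (cutval (Defs.induced A C) s <= cutval (Defs.induced B C) s + 1)%N.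
Proof.
case=> h; have /andP[h1 h2] := cutval_near C s h => //.
by rewrite (leq_trans h1) // leq_addr.
Qed.

End Graph2.

Lemma ceil_near (R : realType) (x y : R) : x <= y -> y <= x + 1 ->
  (Num.ceil x <= Num.ceil y) /\ (Num.ceil y <= Num.ceil x + 1).
Proof.
move=> xy yx; split.
  by rewrite ceil_le_int (le_trans xy) // ceil_ge.
by rewrite ceil_le_int intrD (le_trans yx) // lerD2r ceil_ge.
Qed.

Section Main.
Variable R : realType.
Variable n : nat.
Variable eps : R.
Hypothesis heps : 0 < eps.
Implicit Types (A B : graph n) (e : {set 'I_n}).

Lemma prod_le (f g : 'I_n -> R) (e : {set 'I_n}) (K : R) :
  (forall v, 0 <= f v) -> (forall v, v \notin e -> f v <= g v) ->
  (forall v, v \in e -> f v <= K * g v) ->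
  \prod_v f v <= K ^+ #|e| * \prod_v g v.
Proof.
move=> f0 hoff hon.
have -> : K ^+ #|e| * \prod_v g v = \prod_v ((if v \in e then K else 1) * g v).
  rewrite big_split /= -prodr_const big_mkcond /=; congr (_ * _).
apply: ler_prod => v _; rewrite f0 /=; case: ifP => ve.
  exact: hon.
by rewrite mul1r; apply: hoff; rewrite ve.
Qed.

Lemma deg_diff A B e v : symE A B e -> `|(deg A v)%:R - (deg B v)%:R : R| <= 1.
Proof.
have key : forall A B, addE A B e -> `|(deg A v)%:R - (deg B v)%:R : R| <= 1.
  move=> A' B' h; case ve: (v \in e).
    by rewrite (deg_on h ve) natrD opprD addrA subrr add0r normrN normr1.
  by rewrite (deg_off h (negbT ve)) subrr normr0.
case=> h; first exact: key.
by rewrite distrC; apply: key.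
Qed.

Lemma in_probE A v : in_prob eps A v = Gl (3 / eps) (thr eps - (deg A v)%:R).
Proof. by rewrite /in_prob lap_tailE // divr_gt0. Qed.

Lemma setC_ratio A B e C : symE A B e -> #|e| = 2%N ->
  setC_prob eps A C <= expR (eps / 3) ^+ 2 * setC_prob eps B C.
Proof.
move=> h e2; suff : setC_prob eps A C <= expR (eps / 3) ^+ #|e| * setC_prob eps B C.
  by rewrite e2.
rewrite /setC_prob.
have b0 : 0 < 3 / eps by rewrite divr_gt0.
have binv : (3 / eps)^-1 = eps / 3 by rewrite invf_div.
apply: prod_le.
- move=> v; case: ifP => _; rewrite in_probE.
    exact: Gl_ge0.
  by rewrite Gl_compl //; exact: Gl_ge0.
- by move=> v ve; rewrite !in_probE (deg_same h ve).
- move=> v ve; have hd : `|(thr eps - (deg A v)%:R) - (thr eps - (deg B v)%:R)| <= 1.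
    have -> : (thr eps - (deg A v)%:R) - (thr eps - (deg B v)%:R) =
              - ((deg A v)%:R - (deg B v)%:R) by ring.
    by rewrite normrN; exact: deg_diff h.
  case: ifP => _; rewrite !in_probE -binv.
    exact: Gl_ratio.
  exact: Gl_ratio_compl.
Qed.

Lemma weight_ratio A B e C s : symE A B e ->
  em_weight eps A C s <= expR (eps / 6) * em_weight eps B C s.
Proof.
move=> h; rewrite /em_weight -expRD ler_expR.
have := cutval_diff C s h; rewrite -(ler_nat R) natrD => hc.
have := ler_wpM2l (ltW heps) hc; rewrite mulrDr mulr1.
move=> H; rewrite -mulrDl ler_pM2r ?invr_gt0 //; lra.
Qed.

Lemma norm_ratio A B e C : symE A B e ->
  em_norm eps A C <= expR (eps / 6) * em_norm eps B C.
Proof.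
move=> h; rewrite /em_norm mulr_sumr; apply: ler_sum => t _.
exact: weight_ratio h.
Qed.

Lemma norm_gt0 A C : 0 < em_norm eps A C.
Proof.
rewrite /em_norm (bigD1 [ffun=> false]) /=; last first.
  by apply/forallP => v; rewrite ffunE implybT.
rewrite ltr_pwDl ?expR_gt0 //.
by apply: sumr_ge0 => t _; rewrite expR_ge0.
Qed.

Lemma setC_ge0 A C : 0 <= setC_prob eps A C.
Proof.
rewrite /setC_prob; apply: prodr_ge0 => v _; case: ifP => _; rewrite in_probE.
  by apply: Gl_ge0; rewrite divr_gt0.
by rewrite Gl_compl ?divr_gt0 //; apply: Gl_ge0; rewrite divr_gt0.
Qed.

Lemma S1_ge0 A C s : 0 <= S1_cond_pmf eps A C s.
Proof.
rewrite /S1_cond_pmf mulr_ge0 ?invr_ge0 ?exprn_ge0 // divr_ge0 ?expR_ge0 //.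
exact: ltW (norm_gt0 _ _).
Qed.

Lemma div_ratio (wA wB NA NB K : R) : 0 < NA -> 0 < NB -> 0 <= wB -> 0 < K ->
  wA <= K * wB -> NB <= K * NA -> wA / NA <= K ^+ 2 * (wB / NB).
Proof.
move=> NA0 NB0 wB0 K0 hw hN.
rewrite ler_pdivrMr //.
have -> : K ^+ 2 * (wB / NB) * NA = K * wB * (K * NA / NB).
  by field; rewrite gt_eqF.
have h1 : 1 <= K * NA / NB by rewrite ler_pdivlMr // mul1r.
apply: (le_trans hw); rewrite ler_peMr // mulr_ge0 // ltW //.
Qed.

Lemma S1_ratio A B e C s : symE A B e ->
  S1_cond_pmf eps A C s <= expR (eps / 3) * S1_cond_pmf eps B C s.
Proof.
move=> h; rewrite /S1_cond_pmf mulrA ler_wpM2r ?invr_ge0 ?exprn_ge0 //.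
have -> : expR (eps / 3) = expR (eps / 6) ^+ 2.
  by rewrite -expRM_natr; congr expR; field.
apply: div_ratio; rewrite ?norm_gt0 ?expR_ge0 ?expR_gt0 //.
- exact: weight_ratio h.
- exact: norm_ratio (symE_sym h).
Qed.


Definition kval A (c : {ffun 'I_n -> bool}) v : int :=
  Num.ceil ((((deg A v)%:R - 1) / 2 : R)) - (ell A c v)%:Z.

Lemma kval_add A B e c v : addE A B e -> #|e| = 2%N -> `|kval A c v - kval B c v| <= 1.
Proof.
move=> h e2; rewrite /kval.
have /andP[l1 l2] := ell_near c v h e2.
case ve: (v \in e); last first.
  by rewrite (deg_off h (negbT ve)) (ell_off c h (negbT ve)) subrr.
rewrite (deg_on h ve).
have [c1 c2] : (Num.ceil (((deg A v)%:R - 1) / 2 : R) <= Num.ceil ((((deg A v + 1)%N)%:R - 1) / 2 : R))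
   /\ (Num.ceil ((((deg A v + 1)%N)%:R - 1) / 2 : R) <= Num.ceil (((deg A v)%:R - 1) / 2 : R) + 1).
  apply: ceil_near.
    by rewrite natrD ler_pM2r ?invr_gt0 //; lra.
  by rewrite natrD; lra.
move: c1 c2; set x := Num.ceil _; set y := Num.ceil _ => c1 c2.
rewrite ler_norml; apply/andP; split; lia.
Qed.

Lemma kval_diff A B e c v : symE A B e -> #|e| = 2%N -> `|kval A c v - kval B c v| <= 1.
Proof.
case=> h e2; first exact: kval_add h e2.
by rewrite distrC; exact: kval_add h e2.
Qed.

Lemma kval_same A B e c v : symE A B e -> v \notin e -> kval A c v = kval B c v.
Proof. by move=> h ve; rewrite /kval (deg_same h ve) (ell_same c h ve). Qed.

Let e0 := eps / 3 / 2.
Let e0_gt0 : 0 < e0. Proof. by rewrite /e0 !divr_gt0. Qed.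

Lemma keepE A c v : keep_prob (eps / 3) A c v = Hk e0 (kval A c v).
Proof. by rewrite /keep_prob dlap_cdfE. Qed.

Lemma conv_ratio (p p' K x y : R) : 0 <= x -> 0 <= y ->
  p <= K * p' -> 1 - p <= K * (1 - p') ->
  p * x + (1 - p) * y <= K * (p' * x + (1 - p') * y).
Proof.
move=> x0 y0 h1 h2.
have := ler_wpM2r x0 h1; have := ler_wpM2r y0 h2.
nra.
Qed.

Lemma algA_ratio A B e s : symE A B e -> #|e| = 2%N ->
  algA_pmf (eps / 3) A s <= expR eps * algA_pmf (eps / 3) B s.
Proof.
move=> h e2; rewrite /algA_pmf mulr_sumr; apply: ler_sum => c1 _.
rewrite mulr_sumr; apply: ler_sum => c2 _.
set w := ((2 : R) ^+ n)^-1 * ((2 : R) ^+ n)^-1.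
have w0 : 0 <= w by rewrite /w mulr_ge0 // invr_ge0 exprn_ge0.
set g := fun X v => keep_prob (eps / 3) X c1 v * (c1 v == s v)%:R
        + (1 - keep_prob (eps / 3) X c1 v) * (c2 v == s v)%:R.
have g0 : forall X v, 0 <= g X v.
  move=> X v; rewrite /g keepE addr_ge0 // mulr_ge0 //.
  - exact: Hk_ge0.
  - by rewrite Hk_compl //; exact: Hk_ge0.
have hp : \prod_v g A v <= expR e0 ^+ #|e| * \prod_v g B v.
  apply: prod_le => // v ve.
    by rewrite /g !keepE (kval_same c1 h ve).
  apply: conv_ratio => //; rewrite !keepE.
    by apply: Hk_ratio => //; exact: kval_diff h e2.
  by apply: Hk_ratio_compl => //; exact: kval_diff h e2.
rewrite mulrCA ler_wpM2l //.
apply: (le_trans hp); rewrite ler_wpM2r ?prodr_ge0 // e2 -expRM_natr ler_expR.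
by rewrite /e0 divfK ?pnatr_eq0 // ler_pdivrMr // ler_peMr ?ltW // ltr1n.
Qed.

End Main.

Unset Implicit Arguments. Set Strict Implicit.

Theorem theorem5p6 (R : realType) (n : nat) (eps : R) (heps : 0 < eps) :
  edge_DP eps (fun E T => @alg_prob R n eps E T).
Proof.
move=> E E' _ _ hn T.
have [e [e2 h]] := neighboring_split hn.
rewrite /alg_prob mulr_sumr; apply: ler_sum => s _.
rewrite /alg_pmf.
have hA : \sum_C setC_prob eps E C * S1_cond_pmf eps E C s <=
          expR eps * \sum_C setC_prob eps E' C * S1_cond_pmf eps E' C s.
  rewrite mulr_sumr; apply: ler_sum => C _.
  have -> : expR eps = expR (eps / 3) ^+ 2 * expR (eps / 3).
    by rewrite -expRM_natr -expRD; congr expR; field.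
  rewrite mulrACA; apply: ler_pM.
  - exact: setC_ge0.
  - exact: S1_ge0.
  - exact: setC_ratio h e2.
  - exact: S1_ratio h.
have hB := algA_ratio heps s h e2.
lra.
Qed.
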